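(* Let $R$ be a commutative multiplicative hyperring with identity having the zero absorbing property, let $\alpha$ be a good endomorphism of $R$, and let $I$ be a hyperideal of $R$. Suppose that for all $a,b\in R$, $a\circ b\subseteq I$ implies $a\in I$ or $\alpha(b^n)\subseteq I$ for some $n\in\mathbb N$. Then $\sqrt[\alpha]{I}$ is an $\alpha$-prime hyperideal of $R$.
   Context: A multiplicative hyperring is an abelian group $(R,+)$ with a hyperoperation $\circ:R\times R\to \mathcal P^*(R)$ (nonempty subsets) such that $a\circ(b\circ c)=(a\circ b)\circ c$, $a\circ(b+c)\subseteq a\circ b+a\circ c$, $(b+c)\circ a\subseteq b\circ a+c\circ a$, and $a\circ(-b)=(-a)\circ b=-(a\circ b)$. Products of subsets are unions of elementwise products, and $x^n=x\circ\cdots\circ x$ ($n$ factors). Commutative means $a\circ b=b\circ a$. An identity $1$ satisfies $a\in1\circ a$ for all $a$. $R$ has the zero absorbing property if $0\circ r=r\circ0=\{0\}$ for all $r$. A hyperideal is a nonempty $I$ closed under subtraction with $r\circ x\subseteq I$ for $r\in R$, $x\in I$. Standing assumption: all hyperideals are $\mathbf C$-hyperideals, i.e. for every finite product $A=r_1\circ\cdots\circ r_n$, $A\cap I\ne\emptyset$ implies $A\subseteq I$. A good endomorphism $\alpha$ satisfies $\alpha(x+y)=\alpha(x)+\alpha(y)$ and $\alpha(x\circ y)=\alpha(x)\circ\alpha(y)$; it is applied to sets elementwise. The $\alpha$-radical is $\sqrt[\alpha]{I}=\{r:\alpha(r^n)\subseteq I\text{ for some }n\in\mathbb N\}$. A hyperideal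 $J$ is $\alpha$-prime if for all $x,y$, $x\circ y\subseteq J$ implies $x\in J$ or $\alpha(y)\in J$. *)

(* Defs.v *)
From mathcomp Require Import all_boot all_algebra.
Set Implicit Arguments. Unset Strict Implicit. Unset Printing Implicit Defensive.
Import GRing.Theory.
Local Open Scope ring_scope.

Definition hset (R : Type) := R -> Prop.
Definition hsub (R : Type) (A B : hset R) : Prop := forall x, A x -> B x.
Definition hsingle (R : Type) (a : R) : hset R := fun x => x = a.

Section Hyper.
Variable R : zmodType.
Variable hm : R -> R -> hset R.

Definition hprodS (A B : hset R) : hset R :=
  fun z => exists a b, A a /\ B b /\ hm a b z.
Definition hsumS (A B : hset R) : hset R :=
  fun z => exists a b, A a /\ B b /\ z = a + b.
Definition hopp (A : hset R) : hset R := fun z => A (- z).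
Definition himg (f : R -> R) (A : hset R) : hset R :=
  fun z => exists a, A a /\ z = f a.

Definition hseteq (A B : hset R) := hsub A B /\ hsub B A.

Definition mult_hyperring : Prop :=
  (forall a b, exists z, hm a b z) /\
  (forall a b c, hseteq (hprodS (hsingle a) (hm b c)) (hprodS (hm a b) (hsingle c))) /\
  (forall a b c, hsub (hm a (b + c)) (hsumS (hm a b) (hm a c))) /\
  (forall a b c, hsub (hm (b + c) a) (hsumS (hm b a) (hm c a))) /\
  (forall a b, hseteq (hm a (- b)) (hopp (hm a b)) /\ hseteq (hm (- a) b) (hopp (hm a b))).

Definition hcommutative : Prop := forall a b, hseteq (hm a b) (hm b a).
Definition hidentity (one : R) : Prop := forall a, hm one a a.
Definition zero_absorbing : Prop :=
  forall r, hseteq (hm 0 r) (hsingle 0) /\ hseteq (hm r 0) (hsingle 0).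

Fixpoint hprodL_aux (A : hset R) (l : seq R) : hset R :=
  match l with
  | [::] => A
  | r :: l' => hprodL_aux (hprodS A (hsingle r)) l'
  end.
Definition hprodL (r : R) (l : seq R) : hset R := hprodL_aux (hsingle r) l.

(* x^n = x o ... o x (n factors), meaningful for n >= 1; hpow x 0 := {x} is never used *)
Definition hpow (x : R) (n : nat) : hset R := hprodL x (nseq n.-1 x).

Definition hyperideal (I : hset R) : Prop :=
  (exists x, I x) /\
  (forall x y, I x -> I y -> I (x - y)) /\
  (forall r x, I x -> hsub (hm r x) I).

Definition C_hyperideal (I : hset R) : Prop :=
  hyperideal I /\
  forall (r : R) (l : seq R),
    (exists z, hprodL r l z /\ I z) -> hsub (hprodL r l) I.

Definition good_endo (alpha : R -> R) : Prop :=
  (forall x y, alpha (x + y) = alpha x + alpha y) /\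
  (forall x y, hseteq (himg alpha (hm x y)) (hm (alpha x) (alpha y))).

Definition alpha_radical (alpha : R -> R) (I : hset R) : hset R :=
  fun r => exists n : nat, (0 < n)%N /\ hsub (himg alpha (hpow r n)) I.

Definition alpha_prime (alpha : R -> R) (J : hset R) : Prop :=
  C_hyperideal J /\
  forall x y, hsub (hm x y) J -> J x \/ J (alpha y).

End Hyper.

(* Main.v *)
Require Import Defs.
From mathcomp Require Import all_boot all_algebra.
From mathcomp Require Import zify.
Set Implicit Arguments. Unset Strict Implicit. Unset Printing Implicit Defensive.
Import GRing.Theory.
Local Open Scope ring_scope.

Lemma nseq_rcons (T : Type) n (x : T) : nseq n.+1 x = rcons (nseq n x) x.
Proof. by elim: n => //= n ->. Qed.

Section Proofs.
Variable R : zmodType.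
Variable hm : R -> R -> hset R.

Lemma hprodL_aux_rcons (A : hset R) l r z :
  hprodL_aux hm A (rcons l r) z <-> exists a, hprodL_aux hm A l a /\ hm a r z.
Proof.
elim: l A => [|c l IH] A /=.
  split; [move=> [a [b [Ha [Hb Hz]]]]; exists a; rewrite /hsingle in Hb; subst b; by []|].
  move=> [a [Ha Hz]]; exists a, r; by [].
exact: IH.
Qed.

Lemma hpowS r n z : hpow hm r n.+2 z <-> exists a, hpow hm r n.+1 a /\ hm a r z.
Proof. by rewrite /hpow /hprodL -[(n.+2).-1]/(n.+1) nseq_rcons hprodL_aux_rcons. Qed.

Lemma hpow1 r z : hpow hm r 1 z <-> z = r.
Proof. by []. Qed.

Lemma hprodL1 a b z : hprodL hm a [:: b] z <-> hm a b z.
Proof.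
rewrite /hprodL /=; split.
  by move=> [a' [b' [-> [-> H]]]].
by move=> H; exists a, b.
Qed.

Hypothesis Hex : forall a b, exists z, hm a b z.
Hypothesis Hassoc : forall a b c, hseteq (hprodS hm (hsingle a) (hm b c)) (hprodS hm (hm a b) (hsingle c)).
Hypothesis Hdr : forall a b c, hsub (hm a (b + c)) (hsumS (hm a b) (hm a c)).
Hypothesis Hdl : forall a b c, hsub (hm (b + c) a) (hsumS (hm b a) (hm c a)).
Hypothesis Hneg : forall a b, hseteq (hm a (- b)) (hopp (hm a b)) /\ hseteq (hm (- a) b) (hopp (hm a b)).
Hypothesis Hcomm : forall a b z, hm a b z -> hm b a z.
Hypothesis Hzero : forall r z, hm 0 r z -> z = 0.

Lemma assoc1 a b c w u : hm a b w -> hm w c u -> exists v, hm b c v /\ hm a v u.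
Proof.
move=> H1 H2; have [_ H] := Hassoc a b c.
have [a' [v [Ha' [Hv Hu]]]] : hprodS hm (hsingle a) (hm b c) u.
  by apply: H; exists w, c.
by rewrite /hsingle in Ha'; subst a'; exists v.
Qed.

Lemma assoc2 a b c v u : hm b c v -> hm a v u -> exists w, hm a b w /\ hm w c u.
Proof.
move=> H1 H2; have [H _] := Hassoc a b c.
have [w [c' [Hw [Hc Hu]]]] : hprodS hm (hm a b) (hsingle c) u.
  by apply: H; exists a, v.
by rewrite /hsingle in Hc; subst c'; exists w.
Qed.

Lemma hpow_ex r n : exists z, hpow hm r n.+1 z.
Proof.
elim: n => [|n [a Ha]]; first by exists r.
have [z Hz] := Hex a r; exists z; apply/hpowS; by exists a.
Qed.

Lemma hpow_add y i j a b c : (0 < i)%N -> (0 < j)%N ->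
  hpow hm y i a -> hpow hm y j b -> hm a b c -> hpow hm y (i + j) c.
Proof.
case: i => // i _; case: j => // j _.
elim: j b c => [|j IH] b c Ha Hb Hc.
  move/hpow1: Hb => Eb; subst b; rewrite addn1; apply/hpowS; by exists a.
move/hpowS: Hb => [b' [Hb' Hb]].
have [d [Hd Hc']] := assoc2 Hb Hc.
have := IH _ _ Ha Hb' Hd => Hd'.
rewrite addnS; apply/hpowS; exists d; split => //.
Qed.

Lemma hpow_mul y n u m e : (0 < n)%N ->
  hpow hm y n u -> hpow hm u m.+1 e -> hpow hm y (n * m.+1) e.
Proof.
move=> Hn Hu; elim: m e => [|m IH] e.
  by move/hpow1 => ->; rewrite muln1.
move/hpowS => [e' [He' He]].
have := hpow_add _ _ (IH _ He') Hu He.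
rewrite [(n * m.+2)%N]mulnS addnC; apply.
  by rewrite muln_gt0 Hn.
by [].
Qed.

Lemma hpow_neg y n z : hpow hm (- y) n.+1 z -> hpow hm y n.+1 z \/ hpow hm y n.+1 (- z).
Proof.
elim: n z => [|n IH] z.
  by move/hpow1 => ->; right; rewrite opprK.
move/hpowS => [a [Ha Hz]].
have [[H1 _] [_ H2]] := Hneg a y.
have Hz' : hm a y (- z) by apply: H1.
case: (IH _ Ha) => Ha'.
  by right; apply/hpowS; exists a.
left; apply/hpowS; exists (- a); split => //.
by apply: H2; rewrite /hopp.
Qed.

Lemma hpow_prod r x z n w : hm r x z -> hpow hm z n.+1 w ->
  exists a b, hpow hm r n.+1 a /\ hpow hm x n.+1 b /\ hm a b w.
Proof.
move=> Hz; elim: n w => [|n IH] w.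
  by move/hpow1 => ->; exists r, x.
move/hpowS => [w' [Hw' Hw]].
have [a [b [Ha [Hb Hab]]]] := IH _ Hw'.
have [v [Hv Hwv]] := assoc1 Hab Hw.
have [t [Ht Hvt]] := assoc2 Hz Hv.
have Ht' := Hcomm Ht.
have [s [Hs Hvs]] := assoc1 Ht' Hvt.
have [a' [Ha' Hu]] := assoc2 Hvs Hwv.
exists a', s; split; [apply/hpowS; by exists a|split => //].
apply/hpowS; by exists b.
Qed.

Variable alpha : R -> R.
Hypothesis Hadd : forall x y, alpha (x + y) = alpha x + alpha y.
Hypothesis Hmul : forall x y z, hm x y z -> hm (alpha x) (alpha y) (alpha z).

Lemma alpha0 : alpha 0 = 0.
Proof.
have := Hadd 0 0; rewrite addr0 => H.
by apply: (addrI (alpha 0)); rewrite addr0 -H.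
Qed.

Lemma alphaN x : alpha (- x) = - alpha x.
Proof.
have := Hadd x (- x); rewrite subrr alpha0 => H.
by rewrite -[alpha (- x)](addKr (alpha x)) -H addr0.
Qed.

Lemma hpow_alpha r n z : (0 < n)%N -> hpow hm r n z -> hpow hm (alpha r) n (alpha z).
Proof.
case: n => // n _; elim: n z => [|n IH] z.
  by move/hpow1 => ->.
move/hpowS => [a [Ha Hz]]; apply/hpowS; exists (alpha a); split; [exact: IH|exact: Hmul].
Qed.

Variable I : hset R.
Hypothesis HI : hyperideal hm I.

Lemma I0 : I 0.
Proof. by have [[x Hx] [Hs _]] := HI; have := Hs _ _ Hx Hx; rewrite subrr. Qed.

Lemma IN x : I x -> I (- x).
Proof. by move=> Hx; have [_ [Hs _]] := HI; have := Hs _ _ I0 Hx; rewrite sub0r. Qed.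

Lemma ID x y : I x -> I y -> I (x + y).
Proof.
by move=> Hx Hy; have [_ [Hs _]] := HI; have := Hs _ _ Hx (IN Hy); rewrite opprK.
Qed.

Lemma Iabs r x z : I x -> hm r x z -> I z.
Proof. by move=> Hx Hz; have [_ [_ Ha]] := HI; exact: Ha _ _ Hx _ Hz. Qed.

Lemma Iabs' r x z : I x -> hm x r z -> I z.
Proof. by move=> Hx Hz; apply: Iabs Hx (Hcomm Hz). Qed.

Lemma Ibig x n d a : (forall z, hpow hm x n.+1 z -> I (alpha z)) ->
  hpow hm x (n.+1 + d) a -> I (alpha a).
Proof.
move=> Hx; elim: d a => [|d IH] a; first by rewrite addn0; apply: Hx.
rewrite addnS; move/hpowS => [a' [Ha' Ha]].
exact: Iabs' (IH _ Ha') (Hmul Ha).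
Qed.

Section Sum.
Variables x y : R.

Definition M (i j : nat) (w : R) : Prop :=
  (i = 0%N /\ (0 < j)%N /\ hpow hm y j w) \/
  (j = 0%N /\ (0 < i)%N /\ hpow hm x i w) \/
  (exists a b, (0 < i)%N /\ (0 < j)%N /\ hpow hm x i a /\ hpow hm y j b /\ hm a b w).

Lemma Mx i j w z : M i j w -> hm w x z -> M i.+1 j z.
Proof.
move=> [[-> [Hj Hw]]|[[-> [Hi Hw]]|[a [b [Hi [Hj [Ha [Hb Hab]]]]]]]] Hz.
- right; right; exists x, w; do 4 split => //; exact: Hcomm.
- right; left; do 2 split => //; case: i Hi Hw => // i _ Hw; apply/hpowS; by exists w.
- right; right.
  have [v [Hv Hzv]] := assoc1 Hab Hz.
  have [d [Hd Hz']] := assoc2 (Hcomm Hv) Hzv.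
  exists d, b; split; first by [].
  split; first by []; split; last by [].
  case: i Hi Ha Hd => // i _ Ha Hd; apply/hpowS; by exists a.
Qed.

Lemma My i j w z : M i j w -> hm w y z -> M i j.+1 z.
Proof.
move=> [[-> [Hj Hw]]|[[-> [Hi Hw]]|[a [b [Hi [Hj [Ha [Hb Hab]]]]]]]] Hz.
- left; do 2 split => //; case: j Hj Hw => // j _ Hw; apply/hpowS; by exists w.
- right; right; exists w, y; by do 4 split => //.
- right; right.
  have [v [Hv Hzv]] := assoc1 Hab Hz.
  exists a, v; split; first by [].
  split; first by []; split; first by []; split; last by [].
  case: j Hj Hb Hv => // j _ Hb Hv; apply/hpowS; by exists b.
Qed.

Definition W k w := exists i j, (i + j)%N = k /\ M i j w.

Inductive S (k : nat) : R -> Prop :=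
| S0 : S k 0
| Sc w s : W k w -> S k s -> S k (w + s).

Lemma Sadd k s t : S k s -> S k t -> S k (s + t).
Proof.
elim=> [|w s' Hw _ IH] Ht; first by rewrite add0r.
by rewrite -addrA; apply: Sc => //; exact: IH.
Qed.

Lemma Smul k c s z : (forall w z, W k w -> hm w c z -> W k.+1 z) ->
  S k s -> hm s c z -> S k.+1 z.
Proof.
move=> HW Hs; elim: Hs z => [|w s' Hw _ IH] z Hz.
  by rewrite (Hzero Hz); constructor.
have [p [q [Hp [Hq ->]]]] := Hdl Hz.
constructor; [exact: HW Hp|exact: IH].
Qed.

Lemma pow_sum k z : hpow hm (x + y) k.+1 z -> S k.+1 z.
Proof.
elim: k z => [|k IH] z.
  move/hpow1 => ->; rewrite -[y]addr0 addrA -addrA.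
  constructor; first by exists 1%N, 0%N; split => //; right; left.
  rewrite addr0 -[y]addr0; constructor; last by constructor.
  by exists 0%N, 1%N; split => //; left.
move/hpowS => [a [Ha Hz]].
have [p [q [Hp [Hq ->]]]] := Hdr Hz.
apply: Sadd.
  apply: Smul (IH _ Ha) Hp => w u [i [j [Hij Hw]]] Hu.
  exists i.+1, j; split; [by rewrite addSn Hij|exact: Mx Hw Hu].
apply: Smul (IH _ Ha) Hq => w u [i [j [Hij Hw]]] Hu.
exists i, j.+1; split; [by rewrite addnS Hij|exact: My Hw Hu].
Qed.

Lemma sum_rad n m z :
  (forall z, hpow hm x n.+1 z -> I (alpha z)) ->
  (forall z, hpow hm y m.+1 z -> I (alpha z)) ->
  hpow hm (x + y) (n + m).+2 z -> I (alpha z).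
Proof.
move=> Hx Hy Hz.
have := pow_sum Hz; elim => [|w s [i [j [Hij Hw]]] _ IH].
  by rewrite alpha0; exact: I0.
rewrite Hadd; apply: ID => //.
have Hbig : (n.+1 <= i)%N \/ (m.+1 <= j)%N by lia.
have HX : forall a, (n.+1 <= i)%N -> hpow hm x i a -> I (alpha a).
  move=> a Hi; rewrite -(subnKC Hi); exact: Ibig.
have HY : forall a, (m.+1 <= j)%N -> hpow hm y j a -> I (alpha a).
  move=> a Hj; rewrite -(subnKC Hj); exact: Ibig.
case: Hw => [[Hi [Hj Hw]]|[[Hj [Hi Hw]]|[a [b [Hi [Hj [Ha [Hb Hab]]]]]]]].
- apply: HY Hw; lia.
- apply: HX Hw; lia.
- case: Hbig => Hb'.
    exact: Iabs' (HX _ Hb' Ha) (Hmul Hab).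
  exact: Iabs (HY _ Hb' Hb) (Hmul Hab).
Qed.

End Sum.

Hypothesis Hstd : forall J : hset R, hyperideal hm J -> C_hyperideal hm J.
Hypothesis HH : forall a b : R, hsub (hm a b) I ->
     I a \/ exists n : nat, (0 < n)%N /\ hsub (himg alpha (hpow hm b n)) I.

Lemma radE r : alpha_radical hm alpha I r <->
  exists n, forall z, hpow hm r n.+1 z -> I (alpha z).
Proof.
split.
  move=> [[|n] [Hn H]] //; exists n => z Hz; apply: H; by exists z.
move=> [n H]; exists n.+1; split => // u [z [Hz ->]]; exact: H.
Qed.

Lemma Cprop r l z : hprodL hm r l z -> I z -> hsub (hprodL hm r l) I.
Proof. by move=> Hz HIz; have [_ HC] := Hstd HI; apply: HC; exists z. Qed.

Lemma P_hyper : hyperideal hm (alpha_radical hm alpha I).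
Proof.
split; [|split].
- exists 0; apply/radE; exists 0%N => z /hpow1 ->; rewrite alpha0; exact: I0.
- move=> x y /radE [n Hx] /radE [m Hy]; apply/radE.
  have Hy' : forall z, hpow hm (- y) m.+1 z -> I (alpha z).
    move=> z /hpow_neg [Hz|Hz]; first exact: Hy.
    by have := IN (Hy _ Hz); rewrite alphaN opprK.
  exists (n + m).+1 => z Hz; exact: sum_rad Hx Hy' Hz.
- move=> r x /radE [n Hx] z Hz; apply/radE; exists n => w Hw.
  have [a [b [Ha [Hb Hab]]]] := hpow_prod Hz Hw.
  exact: Iabs (Hx _ Hb) (Hmul Hab).
Qed.

Lemma main_sec : alpha_prime hm alpha (alpha_radical hm alpha I).
Proof.
split; first exact: Hstd P_hyper.
move=> x y Hxy.
have [z Hz] := Hex x y.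
have /radE [n Hzn] := Hxy _ Hz.
have [w0 Hw0] := hpow_ex z n.
have [a0 [b0 [Ha0 [Hb0 Hab0]]]] := hpow_prod Hz Hw0.
have HIw0 := Hzn _ Hw0.
have Hsub : hsub (hm (alpha a0) (alpha b0)) I.
  move=> u Hu; apply: (@Cprop (alpha a0) [:: alpha b0] (alpha w0)).
  - by apply/hprodL1; exact: Hmul.
  - by [].
  - by apply/hprodL1.
case: (HH Hsub) => [HIa|[m [Hm Hsm]]].
  left; apply/radE; exists n => u Hu.
  have Hpa := hpow_alpha (ltn0Sn n) Ha0.
  apply: (Cprop Hpa HIa).
  exact: hpow_alpha (ltn0Sn n) Hu.
right; case: m Hm Hsm => // m _ Hsm.
have [e He] := hpow_ex (alpha b0) m.
have HIe : I (alpha e) by apply: Hsm; exists e.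
have Hpb := hpow_alpha (ltn0Sn n) Hb0.
have HN : (0 < n.+1 * m.+1)%N by rewrite muln_gt0.
have He' := hpow_mul (ltn0Sn n) Hpb He.
have He'' := hpow_alpha HN He'.
have HC := Cprop He'' HIe.
exists (n.+1 * m.+1)%N; split => // u [v [Hv ->]].
apply: HC; exact: hpow_alpha HN Hv.
Qed.

End Proofs.

Theorem mainTheorem16 (R : zmodType) (hm : R -> R -> hset R) (one : R)
  (alpha : R -> R) (I : hset R) :
  mult_hyperring hm -> hcommutative hm -> hidentity hm one -> zero_absorbing hm ->
  (* standing assumption: every hyperideal of R is a C-hyperideal *)
  (forall J : hset R, hyperideal hm J -> C_hyperideal hm J) ->
  good_endo hm alpha ->
  hyperideal hm I ->
  (forall a b : R, hsub (hm a b) I ->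
     I a \/ exists n : nat, (0 < n)%N /\ hsub (himg alpha (hpow hm b n)) I) ->
  alpha_prime hm alpha (alpha_radical hm alpha I).
Proof.
move=> [Hex [Hassoc [Hdr [Hdl Hneg]]]] Hc _ Hz Hstd [Hadd Hmul] HI HH.
have Hcomm : forall a b z, hm a b z -> hm b a z by move=> a b z; apply: (Hc a b).1.
have Hzero : forall r z, hm 0 r z -> z = 0 by move=> r z; apply: (Hz r).1.1.
have Hmul' : forall x y z, hm x y z -> hm (alpha x) (alpha y) (alpha z).
  by move=> x y z H; apply: (Hmul x y).1; exists z.
exact: (main_sec Hex Hassoc Hdr Hdl Hneg Hcomm Hzero Hadd Hmul' HI Hstd HH).
Qed.
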